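(* Let $R$ be a regular run, $x$ a track, and $0=t_0<t_1<t_2<\cdots$ the significant moments of $x$. Then: (1) $\mathrm{Deadline}(x)=\infty$ at $0$ and over every interval $(t_{3i},t_{3i+1}]$, and $\mathrm{Deadline}(x)=t_{3i+1}+W$ over every interval $(t_{3i+1},t_{3i+3}]$ (and if the sequence is finite with last element $t_k$, then $\mathrm{Deadline}(x)=\infty$ over $(t_k,\infty)$); (2) if $0\le a<b<\infty$ and $\mathrm{TrackStatus}(x)\neq\text{incrossing}$ over $(a,b)$, then $\mathrm{Deadline}(x)\ge b-\Delta_{close}$ over $(a,b)$.
   Context: Setting (evolving algebra for the railroad crossing). States are structures over a vocabulary containing: a finite universe Tracks; the reals and ExtendedReals $=\mathbb{R}\cup\{\infty\}$ with standard $<$ and $+$ ($\infty$ largest); a nullary real-valued symbol $\mathrm{CT}$ (current time); positive real constants $d_{close},d_{open},d_{min},d_{max}$ with $d_{close}<d_{min}\le d_{max}$; a unary function TrackStatus from Tracks to $\{\text{empty},\text{coming},\text{incrossing}\}$; a unary function Deadline from Tracks to ExtendedReals; a nullary Dir with values in $\{\text{open},\text{close}\}$; a nullary GateStatus with values in $\{\text{opened},\text{closed}\}$. Put $W=d_{min}-d_{close}$ and $\Delta_{close}=d_{close}+(d_{max}-d_{min})=d_{max}-W$. For a track $x$, $s(x)$ is the condition [$\mathrm{TrackStatus}(x)=\text{empty}$ or $\mathrm{CT}+d_{open}<\mathrm{Deadline}(x)$], and SafeToOpen is $\forall x\in\mathrm{Tracks}\ s(x)$. The program has two modules (agents). Gate: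 simultaneously OpenGate ''if Dir=open then GateStatus:=opened'' and CloseGate ''if Dir=close then GateStatus:=closed''. Controller: simultaneously, for every track $x$, SetDeadline$(x)$ ''if TrackStatus$(x)$=coming and Deadline$(x)=\infty$ then Deadline$(x):=\mathrm{CT}+W$'', SignalClose$(x)$ ''if $\mathrm{CT}=$Deadline$(x)$ then Dir:=close'', ClearDeadline$(x)$ ''if TrackStatus$(x)$=empty and Deadline$(x)<\infty$ then Deadline$(x):=\infty$'', together with SignalOpen ''if Dir=close and SafeToOpen then Dir:=open''. Executing a module means computing all updates it generates in the current state and performing them simultaneously (nothing happens if the update set is inconsistent). A module is enabled at a state if its update set is consistent and contains an update that changes the state. TrackStatus is external (changed only by the environment); Deadline, Dir, GateStatus are internal (changed only by the modules); other symbols are static. Runs: for $t\mapsto R(t)$, $t\in[0,\infty)$, let $\rho(t)$ be the reduct of $R(t)$ without CT. $R$ is a pre-run if all $R(t)$ share a superuniverse, $\mathrm{CT}=t$ in $R(t)$, and for every $\tau>0$ there are $0=t_0<\dots<t_n=\tau$ with $\rho$ constant on each $(t_i,t_{i+1})$. For a term $e$ (free variables fixed), $e_t$ is its value in $R(t)$, $e_{t+}$ (resp. $e_{t-}$, $t>0$) its constant value on some $(t,t+\epsilon)$ (resp. $(t-\epsilon,t)$); likewise $\rho(t\pm)$. $e$ holds over an interval if it holds at each point; $e$ becomes (is set to) $a$ at $t$ if $e_{t-}\ne a=e_t$ or $e_t\neq a=e_{t+}$. A pre-run is a run if (i) whenever $\rho(t+)\neq\rho(t)$, $\rho(t+)$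 is the CT-free reduct of the result of executing some modules at $R(t)$ (these agents fire at $t$), with external functions equal in $\rho(t)$ and $\rho(t+)$; (ii) whenever $t>0$ and $\rho(t)\ne\rho(t-)$, they differ only in external functions. An agent is immediate if it fires at every moment it is enabled; bounded if immediate or there is $b>0$ with no interval $(t,t+b)$ over which it is enabled but never fires. Initial states: TrackStatus$(x)$=empty and Deadline$(x)=\infty$ for every track $x$. A regular run is a run $R$ with $R(0)$ initial such that: (Train Motion) for each track $x$ there is a finite or infinite sequence $0=t_0<t_1<t_2<\cdots$ (the significant moments of $x$) with TrackStatus$(x)$=empty over each $[t_{3i},t_{3i+1})$, =coming over each $[t_{3i+1},t_{3i+2})$ where $d_{min}\le t_{3i+2}-t_{3i+1}\le d_{max}$, =incrossing over each $[t_{3i+2},t_{3i+3})$, and, if the sequence is finite with last element $t_k$, then $3\mid k$ and TrackStatus$(x)$=empty over $[t_k,\infty)$; (Controller Timing) Controller is immediate; (Gate Timing) Gate is bounded, there is no interval $(t,t+d_{close})$ over which Dir=close and GateStatus=opened both hold, and no interval $(t,t+d_{open})$ over which Dir=open and GateStatus=closed both hold. *)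

(* Defs.v *)
From Stdlib Require Import Reals List.
Open Scope R_scope.

Inductive ER : Type := Fin (r : R) | Inf.

Definition ER_lt (a b : ER) : Prop :=
  match a, b with
  | Fin r, Fin s => r < s
  | Fin _, Inf => True
  | Inf, _ => False
  end.

Definition ER_ge (a b : ER) : Prop :=
  match a, b with
  | _, Inf => a = Inf
  | Inf, Fin _ => True
  | Fin r, Fin s => r >= s
  end.

Inductive TStatus := empty | coming | incrossing.
Inductive DirVal := Dopen | Dclose.
Inductive GateVal := opened | closed.

Record Params := mkParams { d_close : R; d_open : R; d_min : R; d_max : R }.

Definition valid_params (p : Params) : Prop :=
  0 < d_close p /\ 0 < d_open p /\ 0 < d_min p /\ 0 < d_max p /\
  d_close p < d_min p /\ d_min p <= d_max p.

Definition W (p : Params) : R := d_min p - d_close p.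
Definition Delta_close (p : Params) : R := d_close p + (d_max p - d_min p).

Definition FiniteType (T : Type) : Prop := exists l : list T, forall x : T, In x l.

(* The CT-free reduct rho(t) of a state: the dynamic functions.
   (Static symbols are fixed by Params; CT is the time t itself.) *)
Record State (Track : Type) := mkState {
  TrackStatus : Track -> TStatus;
  Deadline : Track -> ER;
  Dir : DirVal;
  GateStatus : GateVal }.
Arguments TrackStatus {Track}. Arguments Deadline {Track}.
Arguments Dir {Track}. Arguments GateStatus {Track}.

Definition st_eq {Track} (s1 s2 : State Track) : Prop :=
  (forall x, TrackStatus s1 x = TrackStatus s2 x) /\
  (forall x, Deadline s1 x = Deadline s2 x) /\
  Dir s1 = Dir s2 /\ GateStatus s1 = GateStatus s2.

Definition internal_eq {Track} (s1 s2 : State Track) : Prop :=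
  (forall x, Deadline s1 x = Deadline s2 x) /\
  Dir s1 = Dir s2 /\ GateStatus s1 = GateStatus s2.

Inductive Update (Track : Type) :=
  | UDeadline (x : Track) (e : ER)
  | UDir (d : DirVal)
  | UGate (g : GateVal).
Arguments UDeadline {Track}. Arguments UDir {Track}. Arguments UGate {Track}.

Definition UpdSet (Track : Type) := Update Track -> Prop.

Definition SafeToOpen {Track} (p : Params) (s : State Track) (t : R) : Prop :=
  forall x, TrackStatus s x = empty \/ ER_lt (Fin (t + d_open p)) (Deadline s x).

Definition ctrl_upd {Track} (p : Params) (s : State Track) (t : R) : UpdSet Track :=
  fun u => match u with
  | UDeadline x e =>
      (TrackStatus s x = coming /\ Deadline s x = Inf /\ e = Fin (t + W p)) \/
      (TrackStatus s x = empty /\ ER_lt (Deadline s x) Inf /\ e = Inf)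
  | UDir d =>
      (d = Dclose /\ exists x, Deadline s x = Fin t) \/
      (d = Dopen /\ Dir s = Dclose /\ SafeToOpen p s t)
  | UGate _ => False
  end.

Definition gate_upd {Track} (s : State Track) : UpdSet Track :=
  fun u => match u with
  | UGate g => (g = opened /\ Dir s = Dopen) \/ (g = closed /\ Dir s = Dclose)
  | _ => False
  end.

Inductive Agent := Gate | Controller.

Definition agent_upd {Track} (p : Params) (A : Agent) (s : State Track) (t : R)
  : UpdSet Track :=
  match A with Gate => gate_upd s | Controller => ctrl_upd p s t end.

Definition consistent {Track} (U : UpdSet Track) : Prop :=
  (forall x e1 e2, U (UDeadline x e1) -> U (UDeadline x e2) -> e1 = e2) /\
  (forall d1 d2, U (UDir d1) -> U (UDir d2) -> d1 = d2) /\
  (forall g1 g2, U (UGate g1) -> U (UGate g2) -> g1 = g2).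

Definition applied {Track} (U : UpdSet Track) (s s' : State Track) : Prop :=
  (forall x, TrackStatus s' x = TrackStatus s x) /\
  (forall x, (forall e, U (UDeadline x e) -> Deadline s' x = e) /\
             ((forall e, ~ U (UDeadline x e)) -> Deadline s' x = Deadline s x)) /\
  (forall d, U (UDir d) -> Dir s' = d) /\
  ((forall d, ~ U (UDir d)) -> Dir s' = Dir s) /\
  (forall g, U (UGate g) -> GateStatus s' = g) /\
  ((forall g, ~ U (UGate g)) -> GateStatus s' = GateStatus s).

Definition exec_rel {Track} (p : Params) (M : Agent -> Prop) (s : State Track)
  (t : R) (s' : State Track) : Prop :=
  let U := fun u => exists A, M A /\ agent_upd p A s t u in
  (consistent U -> applied U s s') /\ (~ consistent U -> st_eq s' s).

Definition changes {Track} (u : Update Track) (s : State Track) : Prop :=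
  match u with
  | UDeadline x e => Deadline s x <> e
  | UDir d => Dir s <> d
  | UGate g => GateStatus s <> g
  end.

Definition enabled {Track} (p : Params) (A : Agent) (s : State Track) (t : R) : Prop :=
  consistent (agent_upd p A s t) /\
  exists u, agent_upd p A s t u /\ changes u s.

Definition RightLim {Track} (rho : R -> State Track) (t : R) (s : State Track) : Prop :=
  exists eps, 0 < eps /\ forall u, t < u < t + eps -> st_eq (rho u) s.
Definition LeftLim {Track} (rho : R -> State Track) (t : R) (s : State Track) : Prop :=
  exists eps, 0 < eps <= t /\ forall u, t - eps < u < t -> st_eq (rho u) s.

(* A pre-run, given by its CT-free reducts rho(t), t >= 0 (CT = t implicitly;
   the values of rho at negative arguments are irrelevant). *)
Definition pre_run {Track} (rho : R -> State Track) : Prop :=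
  forall tau, 0 < tau ->
  exists (n : nat) (pt : nat -> R),
    pt 0%nat = 0 /\ pt n = tau /\
    (forall i, (i < n)%nat -> pt i < pt (S i)) /\
    (forall i, (i < n)%nat -> forall u v,
        pt i < u < pt (S i) -> pt i < v < pt (S i) -> st_eq (rho u) (rho v)).

Definition is_run {Track} (p : Params) (rho : R -> State Track) : Prop :=
  pre_run rho /\
  (forall t s, 0 <= t -> RightLim rho t s -> ~ st_eq s (rho t) ->
     (exists M, exec_rel p M (rho t) t s) /\
     (forall x, TrackStatus s x = TrackStatus (rho t) x)) /\
  (forall t s, 0 < t -> LeftLim rho t s -> internal_eq (rho t) s).

Definition fires {Track} (p : Params) (rho : R -> State Track) (A : Agent) (t : R)
  : Prop :=
  exists s, RightLim rho t s /\ ~ st_eq s (rho t) /\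
    exists M, M A /\ exec_rel p M (rho t) t s.

Definition immediate {Track} (p : Params) (rho : R -> State Track) (A : Agent) : Prop :=
  forall t, 0 <= t -> enabled p A (rho t) t -> fires p rho A t.

Definition bounded {Track} (p : Params) (rho : R -> State Track) (A : Agent) : Prop :=
  immediate p rho A \/
  exists b, 0 < b /\ forall t, 0 <= t ->
    ~ ((forall u, t < u < t + b -> enabled p A (rho u) u) /\
       (forall u, t < u < t + b -> ~ fires p rho A u)).

Definition initial_state {Track} (s : State Track) : Prop :=
  forall x, TrackStatus s x = empty /\ Deadline s x = Inf.

(* valid indices of a finite (Some k: t_0..t_k) or infinite (None) sequence *)
Definition idx_ok (len : option nat) (n : nat) : Prop :=
  match len with None => True | Some k => (n <= k)%nat end.

Definition sig_moments {Track} (p : Params) (rho : R -> State Track) (x : Track)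
  (sig : nat -> R) (len : option nat) : Prop :=
  sig 0%nat = 0 /\
  (forall n, idx_ok len (S n) -> sig n < sig (S n)) /\
  (forall i, idx_ok len (3*i+1) ->
     forall u, sig (3*i)%nat <= u < sig (3*i+1)%nat -> TrackStatus (rho u) x = empty) /\
  (forall i, idx_ok len (3*i+2) ->
     (forall u, sig (3*i+1)%nat <= u < sig (3*i+2)%nat -> TrackStatus (rho u) x = coming) /\
     d_min p <= sig (3*i+2)%nat - sig (3*i+1)%nat <= d_max p) /\
  (forall i, idx_ok len (3*i+3) ->
     forall u, sig (3*i+2)%nat <= u < sig (3*i+3)%nat -> TrackStatus (rho u) x = incrossing) /\
  (forall k, len = Some k ->
     (exists j, k = (3*j)%nat) /\
     forall u, sig k <= u -> TrackStatus (rho u) x = empty).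

Definition regular_run {Track} (p : Params) (rho : R -> State Track) : Prop :=
  is_run p rho /\
  initial_state (rho 0) /\
  (forall x, exists sig len, sig_moments p rho x sig len) /\
  immediate p rho Controller /\
  bounded p rho Gate /\
  (forall t, 0 <= t -> ~ (forall u, t < u < t + d_close p ->
        Dir (rho u) = Dclose /\ GateStatus (rho u) = opened)) /\
  (forall t, 0 <= t -> ~ (forall u, t < u < t + d_open p ->
        Dir (rho u) = Dopen /\ GateStatus (rho u) = closed)).

(* Main.v *)
Require Import Defs.
From Stdlib Require Import Reals List Lra Lia Classical.
Open Scope R_scope.

Lemma idx_mono len i j : idx_ok len j -> (i <= j)%nat -> idx_ok len i.
Proof. destruct len; simpl; intros; [lia|exact I]. Qed.


Lemma sig_incr {T} p (rho : R -> State T) y sig len :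
  sig_moments p rho y sig len ->
  forall j i, idx_ok len j -> (i < j)%nat -> sig i < sig j.
Proof.
  intros (H0&Hinc&_) j. induction j; intros i Hj Hij. lia.
  destruct (Nat.eq_dec i j).
  - subst. apply Hinc; auto.
  - apply Rlt_trans with (sig j).
    + apply IHj; [apply (idx_mono len j (S j) Hj); lia | lia].
    + apply Hinc; auto.
Qed.

Lemma sig_nonneg {T} p (rho : R -> State T) y sig len :
  sig_moments p rho y sig len -> forall j, idx_ok len j -> 0 <= sig j.
Proof.
  intros Hs j Hj. pose proof Hs as (H0&_). destruct j. lra.
  rewrite <- H0. left. eapply sig_incr; eauto. lia.
Qed.

Fixpoint st (j : nat) : TStatus :=
  match j with 0 => empty | 1 => coming | 2 => incrossing | S (S (S j')) => st j' end.

Lemma dec3 j : exists i, j = (3*i)%nat \/ j = (3*i+1)%nat \/ j = (3*i+2)%nat.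
Proof.
  induction j as [|j [i [E|[E|E]]]].
  - exists 0%nat; lia.
  - exists i; lia.
  - exists i; lia.
  - exists (S i); lia.
Qed.

Lemma st_all i : st (3*i) = empty /\ st (3*i+1) = coming /\ st (3*i+2) = incrossing.
Proof.
  induction i. simpl; auto.
  replace (3 * S i)%nat with (S (S (S (3*i)))) by lia.
  replace (S (S (S (3 * i))) + 1)%nat with (S (S (S (3 * i + 1)))) by lia.
  replace (S (S (S (3 * i))) + 2)%nat with (S (S (S (3 * i + 2)))) by lia.
  simpl. exact IHi.
Qed.

Lemma st_neq j : st (S j) <> st j.
Proof.
  destruct (dec3 j) as [i [-> |[-> | ->]]]; destruct (st_all i) as (A&B&C).
  - replace (S (3*i)) with (3*i+1)%nat by lia. congruence.
  - replace (S (3*i+1)) with (3*i+2)%nat by lia. congruence.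
  - replace (S (3*i+2)) with (3*(S i))%nat by lia.
    destruct (st_all (S i)) as (A'&_). congruence.
Qed.

Lemma SM1 {T} p (rho : R -> State T) y sig len :
  sig_moments p rho y sig len ->
  forall j, idx_ok len (S j) -> forall v, sig j <= v < sig (S j) ->
  TrackStatus (rho v) y = st j.
Proof.
  intros Hs j Hj v Hv. destruct Hs as (H0&Hinc&He&Hc&Hi&Hf).
  destruct (dec3 j) as [i [E|[E|E]]]; subst j; destruct (st_all i) as (A&B&C).
  - rewrite A. replace (S (3*i)) with (3*i+1)%nat in * by lia. apply (He i Hj v Hv).
  - rewrite B. replace (S (3*i+1)) with (3*i+2)%nat in * by lia.
    apply (proj1 (Hc i Hj)); auto.
  - rewrite C. replace (S (3*i+2)) with (3*i+3)%nat in * by lia. apply (Hi i Hj v Hv).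
Qed.

Lemma SM0 {T} p (rho : R -> State T) y sig len :
  sig_moments p rho y sig len ->
  forall j, idx_ok len j -> TrackStatus (rho (sig j)) y = st j.
Proof.
  intros Hs j Hj. destruct (classic (idx_ok len (S j))) as [HS|HS].
  - apply (SM1 p rho y sig len Hs j HS). split. lra. eapply sig_incr; eauto.
  - destruct len as [k|]; simpl in *; [|exfalso; apply HS; exact I].
    assert (j = k) by lia. subst. destruct Hs as (_&_&_&_&_&Hf).
    destruct (Hf k eq_refl) as [[i ->] Hf']. rewrite (proj1 (st_all i)). apply Hf'. lra.
Qed.

Lemma nomoment {T} p (rho : R -> State T) y sig len :
  sig_moments p rho y sig len -> forall c c', 0 <= c ->
  (forall u v, c<u<c' -> c<v<c' -> st_eq (rho u) (rho v)) ->
  forall j, idx_ok len j -> ~ (c < sig j < c').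
Proof.
  intros Hs c c' Hc Hcst j Hj [H1 H2].
  destruct j as [|j]. { destruct Hs as (H0&_). lra. }
  set (v := (Rmax c (sig j) + sig (S j)) / 2).
  assert (sig j < sig (S j)) by (eapply sig_incr; eauto).
  assert (Hv1: Rmax c (sig j) < sig (S j)) by (apply Rmax_lub_lt; lra).
  assert (c <= Rmax c (sig j)) by apply Rmax_l.
  assert (sig j <= Rmax c (sig j)) by apply Rmax_r.
  assert (E1: TrackStatus (rho v) y = st j).
  { apply (SM1 p rho y sig len Hs); [exact Hj | unfold v; lra]. }
  assert (E2: TrackStatus (rho (sig (S j))) y = st (S j)).
  { apply (SM0 p rho y sig len Hs); exact Hj. }
  destruct (Hcst v (sig (S j))) as [Hst _]. unfold v; lra. lra.
  apply (st_neq j). rewrite <- E2, <- E1. symmetry. apply Hst.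
Qed.

Lemma idx23 {T} p (rho : R -> State T) y sig len m :
  sig_moments p rho y sig len -> idx_ok len (3*m+2) -> idx_ok len (3*m+3).
Proof.
  intros Hs H. destruct len as [k|]; [|exact I]. simpl in *.
  destruct Hs as (_&_&_&_&_&Hf). destruct (Hf k eq_refl) as [[j ->] _]. lia.
Qed.

Lemma search {T} p (rho : R -> State T) y sig len u :
  sig_moments p rho y sig len -> 0 < u ->
  forall N, idx_ok len N -> u <= sig N -> exists j, (j < N)%nat /\ sig j < u <= sig (S j).
Proof.
  intros Hs Hu N. induction N; intros HN HuN.
  - destruct Hs as (H0&_). lra.
  - destruct (Rle_or_lt u (sig N)) as [L|L].
    + destruct (IHN (idx_mono len N (S N) HN ltac:(lia)) L) as [j [Hj Hj']].
      exists j; split; [lia|exact Hj'].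
    + exists N. split; [lia| lra].
Qed.

Lemma unb {T} p (rho : R -> State T) y sig len :
  valid_params p -> sig_moments p rho y sig len ->
  forall i, idx_ok len (3*i) -> INR i * d_min p <= sig (3*i)%nat.
Proof.
  intros Hp Hs. pose proof Hs as (H0&_&_&Hcm&_).
  induction i; intros Hi.
  - simpl. rewrite H0. lra.
  - rewrite S_INR.
    assert (Hi0 : idx_ok len (3*i)) by (apply (idx_mono len _ (3*S i) Hi); lia).
    assert (Hi2 : idx_ok len (3*i+2)) by (apply (idx_mono len _ (3*S i) Hi); lia).
    assert (A1 : sig (3*i)%nat < sig (3*i+1)%nat) by (apply (sig_incr p rho y sig len Hs (3*i+1)); [apply (idx_mono len _ (3*S i) Hi); lia|lia]).
    assert (A2 : sig (3*i+2)%nat < sig (3*S i)%nat) by (apply (sig_incr p rho y sig len Hs (3*S i)); [exact Hi|lia]).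
    destruct (proj2 (Hcm i Hi2)) as [Q1 Q2]. specialize (IHi Hi0). lra.
Qed.

Lemma classify {T} p (rho : R -> State T) y sig len :
  valid_params p -> sig_moments p rho y sig len -> forall u, 0 < u ->
  (exists j, idx_ok len (S j) /\ sig j < u <= sig (S j)) \/
  (exists k, len = Some k /\ sig k < u).
Proof.
  intros Hp Hs u Hu. destruct len as [k|].
  - destruct (Rle_or_lt u (sig k)) as [L|L].
    + left. destruct (search p rho y sig (Some k) u Hs Hu k (le_n k) L) as [j [Hj Hj']].
      exists j. split; [simpl; lia | exact Hj'].
    + right. exists k. auto.
  - left. pose proof Hp as (_&_&Hdm&_).
    destruct (INR_unbounded (u / d_min p)) as [i Hi].
    assert (u < INR i * d_min p).
    { assert (u / d_min p * d_min p = u) by (field; lra).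
      assert (u / d_min p * d_min p < INR i * d_min p) by (apply Rmult_lt_compat_r; lra).
      lra. }
    pose proof (unb p rho y sig None Hp Hs i I).
    destruct (search p rho y sig None u Hs Hu (3*i) I ltac:(lra)) as [j [_ Hj']].
    exists j; split; [exact I| exact Hj'].
Qed.

Definition Good {T} (p : Params) (rho : R -> State T) (y : T) (sig : nat -> R)
  (len : option nat) (u : R) : Prop :=
  (u = 0 -> Deadline (rho u) y = Inf) /\
  (forall i, idx_ok len (3*i+1) -> sig (3*i)%nat < u <= sig (3*i+1)%nat ->
     Deadline (rho u) y = Inf) /\
  (forall i, idx_ok len (3*i+3) -> sig (3*i+1)%nat < u <= sig (3*i+3)%nat ->
     Deadline (rho u) y = Fin (sig (3*i+1)%nat + W p)) /\
  (forall k, len = Some k -> sig k < u -> Deadline (rho u) y = Inf).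

Definition GoodAll {T} (p : Params) (rho : R -> State T) (u : R) : Prop :=
  forall y sig len, sig_moments p rho y sig len -> Good p rho y sig len u.

Lemma K_lemma {T} p (rho : R -> State T) c :
  valid_params p -> regular_run p rho -> 0 <= c -> GoodAll p rho c ->
  forall z, TrackStatus (rho c) z = empty -> Deadline (rho c) z <> Fin c.
Proof.
  intros Hp Hreg Hc HG z Hz HD.
  pose proof Hp as (Hdc&Hdo&Hdmin&Hdmax&Hlt&Hle).
  destruct Hreg as (Hrun&Hinit&Hmot&_).
  destruct (Hmot z) as [sig [len Hs]].
  destruct (HG z sig len Hs) as (G0&Gb&Gc&Gd).
  pose proof Hs as (_&_&_&Hcm&Hin&_).
  destruct (Rle_lt_or_eq_dec 0 c Hc) as [Hpos| <-].
  2:{ rewrite G0 in HD; [discriminate|reflexivity]. }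
  destruct (classify p rho z sig len Hp Hs c Hpos) as [[j [Hj [H1 H2]]]|[k [Hk H1]]].
  - destruct (dec3 j) as [m [-> |[-> | ->]]].
    + replace (S (3*m)) with (3*m+1)%nat in * by lia.
      rewrite (Gb m Hj (conj H1 H2)) in HD. discriminate.
    + replace (S (3*m+1)) with (3*m+2)%nat in * by lia.
      assert (Hi3 := idx23 p rho z sig len m Hs Hj).
      assert (sig (3*m+2)%nat < sig (3*m+3)%nat) by (apply (sig_incr p rho z sig len Hs (3*m+3)); [exact Hi3|lia]).
      rewrite (Gc m Hi3 ltac:(lra)) in HD. assert (HD' : sig (3*m+1)%nat + W p = c) by congruence; clear HD; rename HD' into HD.
      destruct (proj2 (Hcm m Hj)) as [Q1 Q2]. unfold W in HD.
      assert (c < sig (3*m+2)%nat) by lra.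
      rewrite (proj1 (Hcm m Hj) c) in Hz; [discriminate|lra].
    + replace (S (3*m+2)) with (3*m+3)%nat in * by lia.
      assert (Hi2 : idx_ok len (3*m+2)) by (apply (idx_mono len _ (3*m+3) Hj); lia).
      assert (sig (3*m+1)%nat < sig (3*m+2)%nat) by (apply (sig_incr p rho z sig len Hs (3*m+2)); [exact Hi2|lia]).
      rewrite (Gc m Hj ltac:(lra)) in HD.
      assert (HD' : sig (3*m+1)%nat + W p = c) by congruence; clear HD; rename HD' into HD. destruct (proj2 (Hcm m Hi2)) as [Q1 Q2]. unfold W in HD. lra.
  - rewrite (Gd k Hk H1) in HD. discriminate.
Qed.

Lemma cons_lemma {T} p (rho : R -> State T) c :
  valid_params p ->
  (forall z, TrackStatus (rho c) z = empty -> Deadline (rho c) z <> Fin c) ->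
  consistent (ctrl_upd p (rho c) c).
Proof.
  intros Hp HK. pose proof Hp as (_&Hdo&_). split; [|split].
  - intros z e1 e2 [(A1&B1&->)|(A1&B1&->)] [(A2&B2&->)|(A2&B2&->)]; auto; congruence.
  - intros d1 d2 [(->&z&Hz)|(->&Hd&Hsafe)] [(->&z'&Hz')|(->&Hd'&Hsafe')]; auto.
    + exfalso. destruct (Hsafe' z) as [E|E]. apply (HK z E Hz). rewrite Hz in E. simpl in E. lra.
    + exfalso. destruct (Hsafe z') as [E|E]. apply (HK z' E Hz'). rewrite Hz' in E. simpl in E. lra.
  - intros g1 g2 [].
Qed.

Lemma G1 {T} p (rho : R -> State T) c s y :
  is_run p rho -> 0 <= c -> RightLim rho c s ->
  (forall e, ~ ctrl_upd p (rho c) c (UDeadline y e)) ->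
  Deadline s y = Deadline (rho c) y.
Proof.
  intros (_&Hi&_) Hc HR Hno.
  destruct (classic (st_eq s (rho c))) as [E|NE]. { destruct E as (_&E&_). apply E. }
  destruct (Hi c s Hc HR NE) as [[M [Hcons Hncons]] _].
  destruct (classic (consistent (fun u => exists A, M A /\ agent_upd p A (rho c) c u))) as [C|NC].
  - destruct (Hcons C) as (_&Hd&_). apply (proj2 (Hd y)). intros e [A [_ HA]].
    destruct A; simpl in HA; [destruct HA | exact (Hno e HA)].
  - destruct (Hncons NC) as (_&E&_). apply E.
Qed.

Lemma G2 {T} p (rho : R -> State T) c s y e :
  immediate p rho Controller -> 0 <= c -> RightLim rho c s ->
  consistent (ctrl_upd p (rho c) c) -> ctrl_upd p (rho c) c (UDeadline y e) ->
  Deadline (rho c) y <> e -> Deadline s y = e.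
Proof.
  intros Himm Hc HR Hcons Hu Hne.
  assert (En : enabled p Controller (rho c) c).
  { split; [exact Hcons | exists (UDeadline y e); split; [exact Hu|exact Hne]]. }
  destruct (Himm c Hc En) as [s2 [HR2 [_ [M [HM Hex]]]]].
  assert (C : consistent (fun u => exists A, M A /\ agent_upd p A (rho c) c u)).
  { destruct Hcons as (C1&C2&C3). split; [|split].
    - intros z e1 e2 [A1 [_ H1]] [A2 [_ H2]].
      destruct A1; [simpl in H1; destruct H1|]. destruct A2; [simpl in H2; destruct H2|].
      exact (C1 z e1 e2 H1 H2).
    - intros d1 d2 [A1 [_ H1]] [A2 [_ H2]].
      destruct A1; [simpl in H1; destruct H1|]. destruct A2; [simpl in H2; destruct H2|].
      exact (C2 d1 d2 H1 H2).
    - intros g1 g2 [A1 [_ H1]] [A2 [_ H2]].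
      destruct A1; [|simpl in H1; destruct H1]. destruct A2; [|simpl in H2; destruct H2].
      simpl in H1, H2.
      destruct H1 as [[-> D1]|[-> D1]], H2 as [[-> D2]|[-> D2]]; congruence. }
  destruct Hex as [Hap _]. destruct (Hap C) as (_&Hd&_).
  assert (E2: Deadline s2 y = e).
  { apply (proj1 (Hd y)). exists Controller. split; [exact HM | exact Hu]. }
  destruct HR as [e1 [He1 H1]]. destruct HR2 as [e2 [He2 H2]].
  assert (Rmin e1 e2 > 0) by (apply Rmin_pos; lra).
  assert (Rmin e1 e2 <= e1) by apply Rmin_l. assert (Rmin e1 e2 <= e2) by apply Rmin_r.
  destruct (H1 (c + Rmin e1 e2 / 2)) as (_&D1&_). lra.
  destruct (H2 (c + Rmin e1 e2 / 2)) as (_&D2&_). lra.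
  rewrite <- D1, D2. exact E2.
Qed.

Lemma step {T} p (rho : R -> State T) c c' :
  valid_params p -> regular_run p rho -> 0 <= c < c' ->
  (forall u v, c<u<c' -> c<v<c' -> st_eq (rho u) (rho v)) ->
  GoodAll p rho c -> forall u, c < u <= c' -> GoodAll p rho u.
Proof.
  intros Hp Hreg Hc Hcst HG u Hu y sig len Hs.
  assert (HK : consistent (ctrl_upd p (rho c) c)).
  { apply cons_lemma; auto. apply (K_lemma p rho c); auto. lra. }
  pose proof Hreg as (Hrun & Hinit & Hmot & Himm & _).
  set (m := (c + c')/2).
  assert (HR : RightLim rho c (rho m)).
  { exists (c'-c). split. lra. intros v Hv. apply Hcst; unfold m; lra. }
  assert (HD : Deadline (rho u) y = Deadline (rho m) y).
  { destruct (Rle_lt_or_eq_dec u c' (proj2 Hu)) as [Hlt|Heq].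
    - destruct (Hcst u m) as (_&E&_); try (unfold m; lra). apply E.
    - subst u. destruct Hrun as (_&_&Hii). destruct (Hii c' (rho m)) as [E _]. lra.
      exists (c'-c). split. lra. intros v Hv. apply Hcst; unfold m; lra. apply E. }
  assert (Lempty : TrackStatus (rho c) y = empty -> Deadline (rho m) y = Inf).
  { intro He. destruct (Deadline (rho c) y) eqn:Ed.
    - apply (G2 p rho c (rho m) y Inf Himm (proj1 Hc) HR HK).
      + unfold ctrl_upd. right. split; [exact He|split; [rewrite Ed; exact I|reflexivity]].
      + rewrite Ed; discriminate.
    - rewrite <- Ed. apply (G1 p rho c (rho m) y Hrun (proj1 Hc) HR).
      intros e [(A&_)|(_&B&_)]; [congruence| rewrite Ed in B; exact B]. }
  assert (Lcoming : TrackStatus (rho c) y = coming -> Deadline (rho c) y = Inf ->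
                    Deadline (rho m) y = Fin (c + W p)).
  { intros He Ed. apply (G2 p rho c (rho m) y _ Himm (proj1 Hc) HR HK).
    + unfold ctrl_upd. left. split; [exact He|split; [exact Ed|reflexivity]].
    + rewrite Ed; discriminate. }
  assert (Lno : TrackStatus (rho c) y <> empty ->
                (TrackStatus (rho c) y = coming -> Deadline (rho c) y <> Inf) ->
                Deadline (rho m) y = Deadline (rho c) y).
  { intros N1 N2. apply (G1 p rho c (rho m) y Hrun (proj1 Hc) HR).
    intros e [(A&B&_)|(A&_)]; [exact (N2 A B) | exact (N1 A)]. }
  pose proof Hs as (H0&Hinc&He&Hcm&Hin&Hf).
  destruct (HG y sig len Hs) as (G0&Gb&Gc&Gd).
  unfold Good. rewrite HD.
  split; [|split; [|split]].
  - intro; lra.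
  - intros i Hi [H1 H2].
    assert (A1 : sig (3*i)%nat <= c).
    { destruct (Rle_or_lt (sig (3*i)%nat) c); auto. exfalso.
      apply (nomoment p rho y sig len Hs c c' (proj1 Hc) Hcst (3*i)).
      apply (idx_mono len _ (3*i+1) Hi); lia. lra. }
    assert (A2 : c' <= sig (3*i+1)%nat).
    { destruct (Rle_or_lt c' (sig (3*i+1)%nat)); auto. exfalso.
      apply (nomoment p rho y sig len Hs c c' (proj1 Hc) Hcst (3*i+1) Hi). lra. }
    apply Lempty. apply (He i Hi). lra.
  - intros i Hi [H1 H2].
    assert (Hi2 : idx_ok len (3*i+2)) by (apply (idx_mono len _ (3*i+3) Hi); lia).
    assert (Hi1 : idx_ok len (3*i+1)) by (apply (idx_mono len _ (3*i+3) Hi); lia).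
    assert (A1 : sig (3*i+1)%nat <= c).
    { destruct (Rle_or_lt (sig (3*i+1)%nat) c); auto. exfalso.
      apply (nomoment p rho y sig len Hs c c' (proj1 Hc) Hcst (3*i+1) Hi1). lra. }
    assert (A2 : c' <= sig (3*i+3)%nat).
    { destruct (Rle_or_lt c' (sig (3*i+3)%nat)); auto. exfalso.
      apply (nomoment p rho y sig len Hs c c' (proj1 Hc) Hcst (3*i+3) Hi). lra. }
    assert (S01 : sig (3*i)%nat < sig (3*i+1)%nat)
      by (apply (sig_incr p rho y sig len Hs (3*i+1)); [exact Hi1|lia]).
    assert (S12 : sig (3*i+1)%nat < sig (3*i+2)%nat)
      by (apply (sig_incr p rho y sig len Hs (3*i+2)); [exact Hi2|lia]).
    destruct (Rle_lt_or_eq_dec _ _ A1) as [Lt|Eq].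
    + assert (Dc : Deadline (rho c) y = Fin (sig (3*i+1)%nat + W p)) by (apply Gc; [exact Hi|lra]).
      rewrite Lno. exact Dc.
      * destruct (Rlt_or_le c (sig (3*i+2)%nat)).
        -- rewrite (proj1 (Hcm i Hi2) c); [discriminate| lra].
        -- rewrite (Hin i Hi c); [discriminate|lra].
      * intros _; rewrite Dc; discriminate.
    + rewrite Lcoming. rewrite Eq; reflexivity.
      * apply (proj1 (Hcm i Hi2) c). lra.
      * apply (Gb i Hi1). lra.
  - intros k Hk H1.
    assert (A1 : sig k <= c).
    { destruct (Rle_or_lt (sig k) c); auto. exfalso.
      apply (nomoment p rho y sig len Hs c c' (proj1 Hc) Hcst k).
      rewrite Hk; simpl; lia. lra. }
    apply Lempty. apply (proj2 (Hf k Hk)). lra.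
Qed.

Lemma Good0 {T} p (rho : R -> State T) : regular_run p rho -> GoodAll p rho 0.
Proof.
  intros (_&Hinit&_) y sig len Hs. unfold Good. split; [|split; [|split]].
  - intros _. apply (proj2 (Hinit y)).
  - intros i Hi [H1 _]. exfalso.
    assert (0 <= sig (3*i)%nat).
    { apply (sig_nonneg p rho y sig len Hs). apply (idx_mono len _ (3*i+1) Hi); lia. }
    lra.
  - intros i Hi [H1 _]. exfalso.
    assert (0 <= sig (3*i+1)%nat).
    { apply (sig_nonneg p rho y sig len Hs). apply (idx_mono len _ (3*i+3) Hi); lia. }
    lra.
  - intros k Hk H1. exfalso.
    assert (0 <= sig k).
    { apply (sig_nonneg p rho y sig len Hs). rewrite Hk; simpl; lia. }
    lra.
Qed.

Lemma GoodAll_all {T} p (rho : R -> State T) : valid_params p -> regular_run p rho ->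
  forall u, 0 <= u -> GoodAll p rho u.
Proof.
  intros Hp Hreg u Hu. destruct (Rle_lt_or_eq_dec 0 u Hu) as [Hpos| <-]; [|apply Good0; auto].
  pose proof Hreg as (Hrun&_). destruct Hrun as (Hpre&_).
  destruct (Hpre u Hpos) as (n & pt & P0 & Pn & Pinc & Pcst).
  assert (Cl : forall i, (i <= n)%nat -> 0 <= pt i /\ forall v, 0 <= v <= pt i -> GoodAll p rho v).
  { induction i; intros Hi.
    - rewrite P0. split; [lra|]. intros v Hv. replace v with 0 by lra. apply Good0; auto.
    - destruct (IHi ltac:(lia)) as [Hnn IH]. assert (pt i < pt (S i)) by (apply Pinc; lia).
      split; [lra|]. intros v Hv. destruct (Rle_or_lt v (pt i)) as [L|L]. apply IH; lra.
      apply (step p rho (pt i) (pt (S i)) Hp Hreg); try lra.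
      + intros a b Ha Hb. apply (Pcst i); auto; lia.
      + apply IH; lra. }
  destruct (Cl n (le_n n)) as [_ H]. apply H. rewrite Pn; lra.
Qed.

Theorem mainTheorem3 (Track : Type) (p : Params) (rho : R -> State Track)
  (x : Track) (sig : nat -> R) (len : option nat) :
  valid_params p -> FiniteType Track ->
  regular_run p rho ->
  sig_moments p rho x sig len ->
  (* (1) *)
  (Deadline (rho 0) x = Inf /\
   (forall i, idx_ok len (3*i+1) ->
      forall u, sig (3*i)%nat < u <= sig (3*i+1)%nat -> Deadline (rho u) x = Inf) /\
   (forall i, idx_ok len (3*i+3) ->
      forall u, sig (3*i+1)%nat < u <= sig (3*i+3)%nat ->
        Deadline (rho u) x = Fin (sig (3*i+1)%nat + W p)) /\
   (forall k, len = Some k -> forall u, sig k < u -> Deadline (rho u) x = Inf)) /\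
  (* (2) *)
  (forall a b, 0 <= a < b ->
     (forall u, a < u < b -> TrackStatus (rho u) x <> incrossing) ->
     forall u, a < u < b -> ER_ge (Deadline (rho u) x) (Fin (b - Delta_close p))).
Proof.
  intros Hp HF Hreg Hs.
  pose proof Hs as (H0&Hinc&He&Hcm&Hin&Hf).
  assert (GA : forall u, 0 <= u -> Good p rho x sig len u).
  { intros u Hu. apply (GoodAll_all p rho Hp Hreg u Hu x sig len Hs). }
  split; [split; [|split; [|split]]|].
  - apply (proj1 (GA 0 (Rle_refl 0))). reflexivity.
  - intros i Hi u Hu.
    assert (0 <= sig (3*i)%nat).
    { apply (sig_nonneg p rho x sig len Hs). apply (idx_mono len _ (3*i+1) Hi); lia. }
    apply (proj1 (proj2 (GA u ltac:(lra))) i Hi Hu).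
  - intros i Hi u Hu.
    assert (0 <= sig (3*i+1)%nat).
    { apply (sig_nonneg p rho x sig len Hs). apply (idx_mono len _ (3*i+3) Hi); lia. }
    apply (proj1 (proj2 (proj2 (GA u ltac:(lra)))) i Hi Hu).
  - intros k Hk u Hu.
    assert (0 <= sig k).
    { apply (sig_nonneg p rho x sig len Hs). rewrite Hk; simpl; lia. }
    apply (proj2 (proj2 (proj2 (GA u ltac:(lra)))) k Hk Hu).
  - intros a b Hab Hnot u Hu.
    destruct (GA u ltac:(lra)) as (G0&Gb&Gc&Gd).
    pose proof Hp as (Hdc&Hdo&Hdmin&Hdmax&Hlt&Hle).
    destruct (classify p rho x sig len Hp Hs u ltac:(lra)) as [[j [Hj [H1 H2]]]|[k [Hk H1]]].
    + destruct (dec3 j) as [m [ -> | [ -> | -> ]]].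
      * replace (S (3*m)) with (3*m+1)%nat in * by lia.
        rewrite (Gb m Hj (conj H1 H2)). simpl. reflexivity.
      * replace (S (3*m+1)) with (3*m+2)%nat in * by lia.
        assert (Hi3 := idx23 p rho x sig len m Hs Hj).
        assert (sig (3*m+2)%nat < sig (3*m+3)%nat)
          by (apply (sig_incr p rho x sig len Hs (3*m+3)); [exact Hi3|lia]).
        rewrite (Gc m Hi3 ltac:(lra)). unfold ER_ge.
        destruct (Rle_or_lt b (sig (3*m+2)%nat)) as [Lb|Lb].
        -- destruct (proj2 (Hcm m Hj)) as [Q1 Q2]. unfold W, Delta_close. lra.
        -- exfalso. apply (Hnot (sig (3*m+2)%nat)). lra. apply (Hin m Hi3). lra.
      * replace (S (3*m+2)) with (3*m+3)%nat in * by lia.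
        exfalso.
        assert (Rmax a (sig (3*m+2)%nat) < u) by (apply Rmax_lub_lt; lra).
        assert (a <= Rmax a (sig (3*m+2)%nat)) by apply Rmax_l.
        assert (sig (3*m+2)%nat <= Rmax a (sig (3*m+2)%nat)) by apply Rmax_r.
        apply (Hnot ((Rmax a (sig (3*m+2)%nat) + u) / 2)). lra.
        apply (Hin m Hj). lra.
    + rewrite (Gd k Hk H1). simpl. reflexivity.
Qed.
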